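(* Let $\psi:V\to\mathbb R$ be an eigenfunction of $-A_\alpha$ with eigenvalue $\lambda\ge0$. Then for every $k\in\mathbb N$, the function $f_{\psi,k}:\Xi_k\to\mathbb R$, $f_{\psi,k}(\eta):=\sum_{x\in V}\psi(x)\eta_x$, is an eigenfunction of $-L_k$ with the same eigenvalue $\lambda$.
   Context: $V$ is a finite set with symmetric non-negative weights $c_{xy}=c_{yx}\ge0$ forming a connected graph, and $\alpha=(\alpha_x)_{x\in V}$ positive. $A_\alpha f(x)=\sum_{y}c_{xy}\alpha_y(f(y)-f(x))$ for $f:V\to\mathbb R$. $\Xi_k:=\{\eta\in\mathbb N_0^V:\sum_x\eta_x=k\}$ and $L_kf(\eta)=\sum_x\eta_x\sum_y c_{xy}(\alpha_y+\eta_y)(f(\eta-\delta_x+\delta_y)-f(\eta))$ for $f:\Xi_k\to\mathbb R$, where $\eta-\delta_x+\delta_y$ is obtained from $\eta$ by moving one particle from $x$ to $y$. An eigenfunction is required to be non-zero. *)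

(* Defs.v *)
From mathcomp Require Import all_boot all_order all_algebra.
Set Implicit Arguments. Unset Strict Implicit. Unset Printing Implicit Defensive.
Import Order.TTheory GRing.Theory Num.Theory.
Local Open Scope ring_scope.

Section Defs.
Variables (R : realFieldType) (V : finType).

Definition A_alpha (c : V -> V -> R) (alpha : V -> R) (f : V -> R) (x : V) : R :=
  \sum_(y : V) c x y * alpha y * (f y - f x).

Definition graph_connected (c : V -> V -> R) : Prop :=
  forall x y : V, connect (fun u v => 0 < c u v) x y.

Definition Xi (k : nat) := { eta : {ffun V -> nat} | (\sum_(x : V) eta x)%N == k }.

Definition move_raw (eta : {ffun V -> nat}) (x y : V) : {ffun V -> nat} :=
  [ffun z => ((eta z - (z == x)) + (z == y))%N].

Lemma move_raw_sum (eta : {ffun V -> nat}) (x y : V) :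
  (0 < eta x)%N ->
  (\sum_(z : V) move_raw eta x y z)%N = (\sum_(z : V) eta z)%N.
Proof.
move=> hx; rewrite /move_raw.
under eq_bigr do rewrite ffunE.
rewrite big_split /=.
rewrite [X in (_ + X)%N](bigD1 y) //= eqxx.
rewrite [X in (_ + (_ + X))%N]big1 ?addn0; last by move=> z hz; rewrite (negbTE hz).
rewrite (bigD1 x) //= eqxx [RHS](bigD1 x) //=.
rewrite (eq_bigr (fun z => eta z)); last by move=> z hz; rewrite (negbTE hz) subn0.
rewrite addnAC subnK //.
Qed.

Lemma move_raw_Xi (k : nat) (eta : {ffun V -> nat}) (x y : V) :
  (0 < eta x)%N -> (\sum_(z : V) eta z)%N == k ->
  (\sum_(z : V) move_raw eta x y z)%N == k.
Proof. by move=> hx; rewrite move_raw_sum. Qed.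

(* moving one particle from x to y; when eta_x = 0 the move is impossible and
   we return eta itself (such terms carry the factor eta_x = 0 in L_k anyway) *)
Definition move (k : nat) (eta : Xi k) (x y : V) : Xi k :=
  match boolP (0 < val eta x)%N with
  | AltTrue hx => exist _ (move_raw (val eta) x y)
                    (move_raw_Xi y hx (valP eta))
  | AltFalse _ => eta
  end.

Definition L_gen (c : V -> V -> R) (alpha : V -> R) (k : nat)
  (f : Xi k -> R) (eta : Xi k) : R :=
  \sum_(x : V) (val eta x)%:R *
    \sum_(y : V) c x y * (alpha y + (val eta y)%:R) * (f (move eta x y) - f eta).

Definition f_psi (psi : V -> R) (k : nat) (eta : Xi k) : R :=
  \sum_(x : V) psi x * (val eta x)%:R.

End Defs.

(* Main.v *)
Require Import Defs.
From mathcomp Require Import all_boot all_order all_algebra.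
From mathcomp Require Import ring lra.
Import Order.TTheory GRing.Theory Num.Theory.
Local Open Scope ring_scope.

Lemma f_move (R : realFieldType) (V : finType) (psi : V -> R) (k : nat)
  (eta : Xi V k) (x y : V) :
  (val eta x)%:R * (f_psi psi (move eta x y) - f_psi psi eta)
  = (val eta x)%:R * (psi y - psi x) :> R.
Proof.
rewrite /move; destruct (boolP (0 < val eta x)%N) as [hx|hx]; last first.
  by move: hx; rewrite lt0n negbK => /eqP ->; rewrite !mul0r.
congr (_ * _); rewrite /f_psi /=.
have -> : \sum_(z : V) psi z * (move_raw (val eta) x y z)%:R =
  \sum_(z : V) (psi z * (val eta z)%:R - psi z * (z == x)%:R + psi z * (z == y)%:R).
  apply: eq_bigr => z _; rewrite /move_raw ffunE natrD natrB; first by ring.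
  by case: eqP => // ->.
rewrite big_split sumrB /=.
have E : forall w : V, \sum_(z : V) psi z * (z == w)%:R = psi w.
  move=> w; rewrite (bigD1 w) //= eqxx mulr1 big1 ?addr0 //.
  by move=> z /negbTE ->; rewrite mulr0.
rewrite !E; ring.
Qed.

Theorem lemma2p1 (R : realFieldType) (V : finType)
  (c : V -> V -> R) (alpha : V -> R)
  (c_sym : forall x y, c x y = c y x)
  (c_ge0 : forall x y, 0 <= c x y)
  (c_conn : graph_connected c)
  (alpha_pos : forall x, 0 < alpha x)
  (psi : V -> R) (lambda : R)
  (psi_nz : exists x, psi x != 0)
  (psi_eig : forall x, - A_alpha c alpha psi x = lambda * psi x)
  (lambda_ge0 : 0 <= lambda) :
  forall k : nat, (0 < k)%N ->
    (exists eta : Xi V k, f_psi psi eta != 0) /\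
    (forall eta : Xi V k,
       - L_gen c alpha (f_psi psi (k:=k)) eta = lambda * f_psi psi eta).
Proof.
move=> k k0; split.
  case: psi_nz => x0 hx0.
  have hs : (\sum_(z : V) [ffun z => if z == x0 then k else 0%N] z)%N == k.
    rewrite (bigD1 x0) //= ffunE eqxx big1 ?addn0 //.
    by move=> z /negbTE hz; rewrite ffunE hz.
  exists (exist (fun e : {ffun V -> nat} => (\sum_(z : V) e z)%N == k) _ hs); rewrite /f_psi /=.
  rewrite (bigD1 x0) //= ffunE eqxx big1 ?addr0.
    by rewrite mulf_neq0 // pnatr_eq0 -lt0n.
  by move=> z /negbTE hz; rewrite ffunE hz mulr0.
move=> eta.
set a := fun z => (val eta z)%:R : R.
have L1 : L_gen c alpha (f_psi psi (k:=k)) eta =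
  \sum_(x : V) a x * A_alpha c alpha psi x +
  \sum_(x : V) \sum_(y : V) a x * a y * c x y * (psi y - psi x).
  rewrite /L_gen -big_split /=; apply: eq_bigr => x _.
  rewrite /A_alpha mulr_sumr mulr_sumr -big_split /=; apply: eq_bigr => y _.
  rewrite mulrCA f_move -/(a x) -/(a y); ring.
set S := \sum_(x : V) \sum_(y : V) _ in L1.
have S0 : S = 0.
  have : S = - S.
    rewrite /S {1}exchange_big /= -sumrN; apply: eq_bigr => y _.
    rewrite -sumrN; apply: eq_bigr => x _; rewrite c_sym; ring.
  move=> h; have : S *+ 2 = 0 by rewrite mulr2n {1}h addNr.
  by rewrite -mulr_natr => /eqP; rewrite mulf_eq0 pnatr_eq0 orbF => /eqP.
rewrite L1 S0 addr0 -sumrN /f_psi mulr_sumr; apply: eq_bigr => x _.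
by rewrite -mulrN psi_eig /a; ring.
Qed.
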